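(* Let $U^{B}_{g+2,n+2}$ be the set of planted unicellular maps of genus $g+2$ with $n+2$ $(np)$-edges that are of type (B) (defined below), and let $U_{g+1,n}$ be the set of planted unicellular maps of genus $g+1$ with $n$ $(np)$-edges. Then there is a bijection between $U^{B}_{g+2,n+2}$ and the disjoint union of $(2n+1)(n+1)$ copies of $U_{g+1,n}$; in particular $|U^{B}_{g+2,n+2}|=(n+1)(2n+1)\,|U_{g+1,n}|$.
   Context: A planted unicellular map is a triple $(H,\alpha,\gamma)$: $H$ a finite set of half-edges, $\alpha$ a fixed-point-free involution of $H$ (edges), $\gamma$ a single cyclic permutation of $H$ (face); vertices are cycles of $\sigma=\alpha\circ\gamma$; a distinguished half-edge $S_1$ with $\sigma(S_1)=S_1$ is the plant; the edge $\{S_1,\alpha(S_1)\}$ is the plant edge and the others are $(np)$-edges; genus $g$ satisfies $2-2g=V-E+1$. Maps are taken up to isomorphism. Put $R_1=\alpha(S_1)$ and let $<_\gamma$ be the linear order $R_1<_\gamma\gamma(R_1)<_\gamma\cdots<_\gamma S_1$. Let $v_1=(h^1,\dots,h^m)$ be the $\sigma$-cycle of $R_1$, with $h^1=R_1$, $h^{i+1}=\sigma(h^i)$. The map is of type (B) if $m\ge3$ and $\alpha(h^2)<_\gamma h^3<_\gamma h^2<_\gamma\alpha(h^3)$. *)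

(* Defs.v *)
From mathcomp Require Import all_boot all_fingroup.
Set Implicit Arguments. Unset Strict Implicit. Unset Printing Implicit Defensive.

Definition pmap (T : finType) := ({perm T} * {perm T} * T)%type.

Section PM.
Variable T : finType.
Implicit Types M : pmap T.

Definition pm_alpha M : {perm T} := M.1.1.
Definition pm_gamma M : {perm T} := M.1.2.
Definition pm_plant M : T := M.2.

(* sigma = alpha o gamma  (in mathcomp, (s * t) x = t (s x)) *)
Definition pm_sigma M : {perm T} := (pm_gamma M * pm_alpha M)%g.

Definition is_pmap M : bool :=
  [forall x, (pm_alpha M (pm_alpha M x) == x) && (pm_alpha M x != x)]
  && [forall x, forall y, y \in porbit (pm_gamma M) x]
  && (pm_sigma M (pm_plant M) == pm_plant M).

Definition nverts M : nat := #|porbits (pm_sigma M)|.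
Definition nedges : nat := #|T| %/ 2.

(* 2 - 2g = V - E + 1, i.e. V + 2g = E + 1 *)
Definition has_genus M (g : nat) : bool := nverts M + 2 * g == nedges + 1.

Definition pm_R1 M : T := pm_alpha M (pm_plant M).

(* position in the linear order <_gamma starting at R1 *)
Definition gpos M (x : T) : nat := findex (pm_gamma M) (pm_R1 M) x.

Definition typeB M : bool :=
  let s := pm_sigma M in
  let a := pm_alpha M in
  let h2 := s (pm_R1 M) in
  let h3 := s h2 in
  [&& 3 <= #|porbit s (pm_R1 M)|,
      gpos M (a h2) < gpos M h3,
      gpos M h3 < gpos M h2 &
      gpos M h2 < gpos M (a h3)].

Definition pm_iso : rel (pmap T) := fun M M' =>
  [exists phi : {perm T},
     [forall x, (phi (pm_alpha M x) == pm_alpha M' (phi x))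
             && (phi (pm_gamma M x) == pm_gamma M' (phi x))]
     && (phi (pm_plant M) == pm_plant M')].
End PM.

(* Half-edge set for maps with n (np)-edges, i.e. n+1 edges: 2(n+1) half-edges.
   Every planted map with n (np)-edges is isomorphic to one on this set. *)
Definition HE (n : nat) : finType := 'I_(n.+1).*2.

Definition Uraw (n g : nat) : {set pmap (HE n)} :=
  [set M | is_pmap M && has_genus M g].
Definition URawB (n g : nat) : {set pmap (HE n)} :=
  [set M | [&& is_pmap M, has_genus M g & typeB M]].

Definition Ucls (n g : nat) : {set {set pmap (HE n)}} :=
  equivalence_partition (@pm_iso (HE n)) (Uraw n g).
Definition UBcls (n g : nat) : {set {set pmap (HE n)}} :=
  equivalence_partition (@pm_iso (HE n)) (URawB n g).

(* Main.v *)
Require Import Defs.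
From mathcomp Require Import all_boot all_fingroup.
From mathcomp Require Import zify.
Set Implicit Arguments. Unset Strict Implicit. Unset Printing Implicit Defensive.

Lemma card_imset_eqrel (aT rT1 rT2 : finType) (f : aT -> rT1) (g : aT -> rT2) :
  (forall x y, (f x == f y) = (g x == g y)) ->
  #|f @: [set: aT]| = #|g @: [set: aT]|.
Proof.
move=> Hfg.
pose h (Y : rT2) := if [pick x | g x == Y] is Some x then Some (f x) else None.
have hg x : h (g x) = Some (f x).
  rewrite /h; case: pickP => [y /eqP Hy|/(_ x)]; last by rewrite eqxx.
  by congr Some; apply/eqP; rewrite Hfg Hy.
have E : (Some \o f) @: [set: aT] = h @: (g @: [set: aT]).
  apply/setP=> z; apply/imsetP/imsetP => [[x _ ->]|[Y /imsetP[x _ ->] ->]].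
    by exists (g x); [apply: imset_f | rewrite hg].
  by exists x; rewrite ?inE ?hg.
rewrite -[LHS](card_imset _ (@Some_inj _)) -imset_comp E card_in_imset //.
move=> _ _ /imsetP[x _ ->] /imsetP[y _ ->]; rewrite !hg => -[] /eqP.
by rewrite Hfg => /eqP.
Qed.

Section FR.
Variables (T T' : finType) (s : {perm T}) (s' : {perm T'}) (e : T' -> T).
Hypothesis e_inj : injective e.
Hypothesis H1 : forall w, exists k, [/\ 0 < k, iter k s (e w) = e (s' w) &
   forall i, 0 < i < k -> iter i s (e w) \notin codom e].
Hypothesis H2 : forall x, exists j, iter j s x \in codom e.

Lemma fr_step w : porbit s (e (s' w)) = porbit s (e w).
Proof.
have [k [_ <- _]] := H1 w.
by rewrite -permX porbit_perm.
Qed.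

Lemma fr_fwd w j : porbit s (e (iter j s' w)) = porbit s (e w).
Proof. by elim: j => [|j IH] //=; rewrite fr_step. Qed.

Lemma fr_bwd i : forall w w', iter i s (e w) = e w' -> w' \in porbit s' w.
Proof.
elim/ltn_ind: i => i IH w w' Hi.
have [k [k0 Hk Hn]] := H1 w.
case: (ltnP i k) => Hik.
  case: (posnP i) => [i0|ip].
    by move: Hi; rewrite i0 /= => /e_inj ->; apply: porbit_id.
  by move: (Hn i); rewrite ip Hik Hi codom_f => /(_ isT).
have : iter (i - k) s (e (s' w)) = e w'.
  by rewrite -Hk -iterD subnK.
move=> H; have H' := IH (i - k) ltac:(lia) _ _ H.
by rewrite -(porbit_perm s' 1) expg1.
Qed.

Lemma first_return : #|porbits s| = #|porbits s'|.
Proof.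
have -> : porbits s = (fun w => porbit s (e w)) @: [set: T'].
  apply/setP=> A; apply/imsetP/imsetP => [[x _ ->]|[w _ ->]]; last by exists (e w).
  have [j /codomP[w Hw]] := H2 x.
  exists w => //; rewrite -Hw -permX porbit_perm //.
have -> : porbits s' = porbit s' @: [set: T'].
  by apply/setP=> A; apply/imsetP/imsetP => [[x _ ->]|[w _ ->]]; [exists x|exists w].
apply: card_imset_eqrel => x y.
rewrite !eq_porbit_mem; apply/idP/idP.
  move=> /porbitP[i Hi].
  by apply: (@fr_bwd i y x); rewrite -permX Hi.
by move=> /porbitP[i ->]; rewrite permX -eq_porbit_mem fr_fwd.
Qed.
End FR.

Section Conj.
Variable T : finType.
Implicit Types (s t : {perm T}) (M : Defs.pmap T).

Lemma iter_conj s t n x : iter n (s ^ t)%g (t x) = t (iter n s x).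
Proof. by elim: n => [|n IH] //=; rewrite IH permJ. Qed.

Lemma porbit_conj s t x : porbit (s ^ t)%g (t x) = t @: porbit s x.
Proof.
apply/setP=> y; apply/porbitP/imsetP => [[i ->]|[z /porbitP[i ->] ->]].
  by exists ((s ^+ i)%g x); rewrite ?mem_porbit // !permX iter_conj.
by exists i; rewrite !permX iter_conj.
Qed.

Lemma card_porbit_conj s t x : #|porbit (s ^ t)%g (t x)| = #|porbit s x|.
Proof. by rewrite porbit_conj card_imset //; apply: perm_inj. Qed.

Lemma card_porbits_conj s t : #|porbits (s ^ t)%g| = #|porbits s|.
Proof.
have -> : porbits (s ^ t)%g = (fun A : {set T} => t @: A) @: porbits s.
  apply/setP=> A; apply/imsetP/imsetP => [[x _ ->]|[B /imsetP[x _ ->] ->]].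
    exists (porbit s (t^-1 x)%g); first by apply: imset_f.
    by rewrite -porbit_conj permKV.
  by exists (t x) => //; rewrite porbit_conj.
by rewrite card_imset //; apply: imset_inj; apply: perm_inj.
Qed.

Lemma fconnect_conj s t x y : fconnect (s ^ t)%g (t x) (t y) = fconnect s x y.
Proof.
apply/idP/idP => H.
  have := iter_findex H; rewrite iter_conj => /perm_inj <-.
  exact: fconnect_iter.
by rewrite -(iter_findex H) -iter_conj fconnect_iter.
Qed.

Lemma order_conj s t x : fingraph.order (s ^ t)%g (t x) = fingraph.order s x.
Proof.
rewrite /fingraph.order -[LHS]cardsE -[RHS]cardsE.
set A := [set y in _]; set B := [set y in _].
have -> : A = t @: B.
  apply/setP=> y; rewrite /A /B inE; apply/idP/imsetP => [H|[z]].
    exists (t^-1 y)%g; rewrite ?permKV // inE.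
    change (is_true (fconnect s x (t^-1 y)%g)); change (is_true (fconnect (s ^ t)%g (t x) y)) in H.
    by rewrite -(fconnect_conj s t) permKV.
  rewrite inE => H ->; change (is_true (fconnect s x z)) in H.
  by change (is_true (fconnect (s ^ t)%g (t x) (t z))); rewrite fconnect_conj.
by rewrite card_imset //; apply: perm_inj.
Qed.

Lemma traject_conj s t n x : traject (s ^ t)%g (t x) n = map t (traject s x n).
Proof. by elim: n x => [|n IH] x //=; rewrite permJ IH. Qed.

Lemma findex_conj s t x y : findex (s ^ t)%g (t x) (t y) = findex s x y.
Proof.
by rewrite /findex /fingraph.orbit order_conj traject_conj index_map //; apply: perm_inj.
Qed.

Definition conjM M t : Defs.pmap T :=
  ((pm_alpha M ^ t)%g, (pm_gamma M ^ t)%g, t (pm_plant M)).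

Lemma sigma_conj M t : pm_sigma (conjM M t) = (pm_sigma M ^ t)%g.
Proof. by rewrite /pm_sigma /= conjMg. Qed.

Lemma iso_conj M t : pm_iso M (conjM M t).
Proof.
apply/existsP; exists t; rewrite eqxx andbT.
by apply/forallP=> x; rewrite /= !permJ !eqxx.
Qed.

Lemma isoP M M' : reflect (exists t, M' = conjM M t) (pm_iso M M').
Proof.
apply: (iffP idP) => [/existsP[t /andP[/forallP H /eqP Hp]]|[t ->]]; last exact: iso_conj.
exists t; case: M' H Hp => [[a' g'] p'] /= H Hp.
rewrite /conjM -Hp; congr (_, _, _); apply/permP => y;
  rewrite -(permKV t y) permJ; have /andP[/eqP E1 /eqP E2] := H (t^-1 y)%g; by rewrite ?E1 ?E2.
Qed.

Lemma conjM1 M : conjM M 1%g = M.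
Proof. by case: M => [[a g] p]; rewrite /conjM /= !conjg1 perm1. Qed.

Lemma conjMM M t u : conjM (conjM M t) u = conjM M (t * u).
Proof. by rewrite /conjM /= !conjgM permM. Qed.

Lemma iso_refl : reflexive (@pm_iso T).
Proof. by move=> M; apply/isoP; exists 1%g; rewrite conjM1. Qed.

Lemma iso_sym M M' : pm_iso M M' -> pm_iso M' M.
Proof.
move/isoP=> [t ->]; apply/isoP; exists (t^-1)%g.
by rewrite conjMM mulgV conjM1.
Qed.

Lemma iso_trans : transitive (@pm_iso T).
Proof.
move=> M2 M1 M3 /isoP[t ->] /isoP[u ->]; apply/isoP; exists (t * u)%g.
by rewrite conjMM.
Qed.

Lemma nverts_conj M t : nverts (conjM M t) = nverts M.
Proof. by rewrite /nverts sigma_conj card_porbits_conj. Qed.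

Lemma has_genus_conj M t g : has_genus (conjM M t) g = has_genus M g.
Proof. by rewrite /has_genus nverts_conj. Qed.

Lemma gpos_conj M t x : gpos (conjM M t) (t x) = gpos M x.
Proof. by rewrite /gpos /pm_R1 /= permJ findex_conj. Qed.

Lemma typeB_conj M t : typeB (conjM M t) = typeB M.
Proof.
rewrite /typeB sigma_conj /pm_R1 /=.
have -> : pm_alpha (conjM M t) = (pm_alpha M ^ t)%g by [].
by rewrite !permJ card_porbit_conj !gpos_conj.
Qed.

Lemma is_pmap_conj1 M t : is_pmap M -> is_pmap (conjM M t).
Proof.
case/andP=> /andP[/forallP Ha /forallP Hg] /eqP Hs.
apply/andP; split; [apply/andP; split|].
- apply/forallP=> x; rewrite -(permKV t x) /= !permJ.
  have /andP[/eqP -> Hn] := Ha (t^-1 x)%g.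
  by rewrite eqxx (inj_eq (@perm_inj _ t)).
- apply/forallP=> x; apply/forallP=> y; rewrite /= -(permKV t x) porbit_conj.
  by rewrite -(permKV t y) imset_f //; have /forallP := Hg (t^-1 x)%g; apply.
- by rewrite sigma_conj /= permJ Hs.
Qed.

Lemma is_pmap_conj M t : is_pmap (conjM M t) = is_pmap M.
Proof.
apply/idP/idP; last exact: is_pmap_conj1.
by move/(is_pmap_conj1 (t^-1)%g); rewrite conjMM mulgV conjM1.
Qed.
End Conj.

Definition mkfun (T : finType) (f : T -> T) := if injectiveb f then f else id.

Lemma mkfun_inj (T : finType) (f : T -> T) : injective (mkfun f).
Proof. rewrite /mkfun; case: (injectiveP f) => // _ x y; exact. Qed.

Definition mkperm (T : finType) (f : T -> T) : {perm T} := perm (@mkfun_inj T f).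

Lemma mkpermE (T : finType) (f : T -> T) : injective f -> mkperm f =1 f.
Proof. by move=> inj_f x; rewrite /mkperm permE /mkfun; case: (injectiveP f). Qed.

Section Norm.
Variable k : nat.
Local Notation T := 'I_k.+1.

Definition cyc : {perm T} := perm (can_inj (@ordSK k.+1)).

Lemma cycE x : val (cyc x) = x.+1 %% k.+1.
Proof. by rewrite permE. Qed.

Lemma iter_cycE i x : val (iter i cyc x) = (x + i) %% k.+1.
Proof.
elim: i => [|i IH] /=; first by rewrite addn0 modn_small.
by rewrite cycE IH -[((x + i) %% k.+1).+1]addn1 modnDml addn1 addnS.
Qed.

Lemma iter_cyc_max (y : T) : iter y.+1 cyc ord_max = y.
Proof.
by apply: val_inj; rewrite iter_cycE /= addnS -addSn modnDl modn_small.
Qed.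

Implicit Types M : Defs.pmap T.

Definition psi M : {perm T} :=
  mkperm (fun i : T => iter i (pm_gamma M) (pm_R1 M)).

Definition nf M := conjM M (psi M)^-1%g.

Section Valid.
Variable M : Defs.pmap T.
Hypothesis HM : is_pmap M.
Local Notation a := (pm_alpha M).
Local Notation g := (pm_gamma M).
Local Notation r := (pm_R1 M).
Local Notation p := (pm_plant M).

Lemma HMa x : a (a x) = x. 
Proof. by case/andP: HM => /andP[/forallP/(_ x)/andP[/eqP -> _] _] _. Qed.

Lemma HMg x y : y \in porbit g x.
Proof.
case/andP: HM => /andP[_ /forallP H] _.
by move/forallP: (H x); apply.
Qed.

Lemma HMs : g p = r.
Proof.
case/andP: HM => _ /eqP; rewrite /pm_sigma permM /pm_R1 => H.
by rewrite -{2}H HMa.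
Qed.

Lemma conn_r y : fconnect g r y.
Proof. by have /porbitP[i ->] := HMg r y; rewrite permX fconnect_iter. Qed.

Lemma order_r : fingraph.order g r = k.+1.
Proof.
rewrite /fingraph.order -[RHS](card_ord k.+1); apply: eq_card => y.
by rewrite [RHS]inE; apply: conn_r.
Qed.

Lemma psi_inj : injective (fun i : T => iter i g r).
Proof.
move=> i j /= H; apply: ord_inj.
have hi : (i : nat) < fingraph.order g r by rewrite order_r.
have hj : (j : nat) < fingraph.order g r by rewrite order_r.
by rewrite -(findex_iter hi) H findex_iter.
Qed.

Lemma psiE i : psi M i = iter i g r.
Proof. by rewrite /psi mkpermE //; apply: psi_inj. Qed.

Lemma psi_cyc i : psi M (cyc i) = g (psi M i).
Proof.
rewrite !psiE; have := ltn_ord i; rewrite ltnS leq_eqVlt => /orP[/eqP Hk|Hi].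
  have -> : (cyc i : nat) = 0 by rewrite cycE Hk modnn.
  rewrite /= -iterS.
  have -> : (i : nat).+1 = fingraph.order g r by rewrite order_r Hk.
  by rewrite (iter_order (@perm_inj _ g)).
by rewrite cycE modn_small.
Qed.

Lemma psi_max : psi M ord_max = p.
Proof.
apply: (@perm_inj _ g); rewrite HMs psiE /= -iterS.
have E := iter_order (@perm_inj _ g) r; rewrite order_r in E; exact: E.
Qed.

Lemma nf_gamma : pm_gamma (nf M) = cyc.
Proof.
apply/permP=> y; rewrite /nf /conjM /= -{1}(permK (psi M) y) permJ -psi_cyc.
by rewrite permK.
Qed.

Lemma nf_plant : pm_plant (nf M) = ord_max.
Proof. by rewrite /nf /conjM /= -psi_max permK. Qed.
End Valid.

Lemma norm_unique M M' :
  pm_gamma M = cyc -> pm_plant M = ord_max ->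
  pm_gamma M' = cyc -> pm_plant M' = ord_max -> pm_iso M M' -> M = M'.
Proof.
move=> gM pM gM' pM' /isoP[t Ht].
suff t1 : t = 1%g by rewrite Ht t1 conjM1.
have tg : (cyc ^ t)%g = cyc by rewrite -{1}gM -gM' Ht.
have tp : t ord_max = ord_max by rewrite -{1}pM -pM' Ht.
apply/permP=> y; rewrite perm1 -{1}(iter_cyc_max y) -iter_conj tg tp.
by rewrite iter_cyc_max.
Qed.

Lemma count_norm (Q : pred (Defs.pmap T)) :
  (forall M t, Q (conjM M t) = Q M) ->
  #|equivalence_partition (@pm_iso _) [set M | is_pmap M && Q M]| =
  #|[set a : {perm T} | is_pmap (a, cyc, ord_max) && Q (a, cyc, ord_max)]|.
Proof.
move=> HQ.
set D := [set M | is_pmap M && Q M].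
set N := [set M in D | (pm_gamma M == cyc) && (pm_plant M == ord_max)].
have nfD M : M \in D -> nf M \in N.
  rewrite !inE => /andP[H1 H2].
  by rewrite is_pmap_conj HQ H1 H2 nf_gamma // nf_plant // !eqxx.
have -> : equivalence_partition (@pm_iso _) D =
          (fun y => [set z in D | pm_iso y z]) @: N.
  apply/setP=> X; apply/imsetP/imsetP => [[x Dx ->]|[y]].
    exists (nf x); first exact: nfD.
    apply/setP=> z; rewrite !inE; case: (is_pmap z && Q z) => //=.
    have hx := iso_conj x (psi x)^-1%g.
    apply/idP/idP => H; first exact: iso_trans (iso_sym hx) H.
    exact: iso_trans hx H.
  by rewrite inE => /andP[Dy _] ->; exists y.
rewrite card_in_imset; last first.
  move=> y y'; rewrite !inE => /and3P[_ /eqP g1 /eqP p1] /and3P[Dy' /eqP g2 /eqP p2] E.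
  apply: norm_unique => //.
  have : y' \in [set z in D | pm_iso y' z] by rewrite !inE Dy' iso_refl.
  by rewrite -E inE => /andP[_].
have -> : N = (fun a => (a, cyc, ord_max)) @: [set a : {perm T} |
   is_pmap (a, cyc, ord_max) && Q (a, cyc, ord_max)].
  apply/setP=> M; rewrite !inE; apply/idP/imsetP => [/and3P[DM /eqP gM /eqP pM]|[a]].
    exists (pm_alpha M); first by rewrite inE -gM -pM; case: M DM {gM pM} => [[? ?] ?].
    by rewrite -gM -pM; case: M {DM gM pM} => [[? ?] ?].
  by rewrite inE => H ->; rewrite H !eqxx.
by rewrite card_imset // => a b [].
Qed.
End Norm.

Section Surg.
Variables k b a : nat.
Hypothesis Hb2 : 2 <= b.
Hypothesis Hba : b < a.
Hypothesis Hak : a <= k.+2.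

Definition ee w := if w == 0 then 0 else if w <= a - b - 1 then w + b
  else if w <= a - 3 then w - (a - b - 1) + 1 else w + 4.
Definition dd x := if x == 0 then 0 else if x < b then x + (a - b - 1) - 1
  else if x < a then x - b else x - 4.
Definition inQ x := [|| x == 1, x == b, x == a | x == a.+1].

Ltac ifl := rewrite /ee; repeat case: ifP; move=> *; lia.
Ltac crush := rewrite /ee /dd /inQ; repeat case: ifP; move=> *; lia.

Lemma ee_le w : w <= k -> ee w <= k.+4. Proof. crush. Qed.
Lemma ee_Q w : ~~ inQ (ee w). Proof. crush. Qed.
Lemma ddK w : dd (ee w) = w. Proof. crush. Qed.
Lemma dd_le x : x <= k.+4 -> ~~ inQ x -> dd x <= k. Proof. crush. Qed.
Lemma eeK x : ~~ inQ x -> ee (dd x) = x. Proof. crush. Qed.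
Lemma ee_lt w : w < k -> ee w < k.+4. Proof. crush. Qed.
Lemma ee_k : ee k = k.+4. Proof. crush. Qed.
Lemma ee_0 : ee 0 = 0. Proof. by []. Qed.
Lemma ee_inj w w' : ee w = ee w' -> w = w'.
Proof. by move=> H; rewrite -(ddK w) H ddK. Qed.
Lemma ee_gen w : w.+1 <= k -> w != 0 -> w != a - b - 1 -> w != a - 3 ->
  ee w.+1 = (ee w).+1.
Proof. crush. Qed.

Section Fwd.
Variable A : nat -> nat.
Hypothesis HA : forall x, x <= k.+4 -> [/\ A x <= k.+4, A (A x) = x & A x != x].
Hypothesis HA0 : A 0 = k.+4.
Hypothesis Ha1 : A 1 = a.
Hypothesis Hab : A a.+1 = b.

Lemma HAl x : x <= k.+4 -> A x <= k.+4. Proof. by case/HA. Qed.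
Lemma HAK x : x <= k.+4 -> A (A x) = x. Proof. by case/HA. Qed.

Lemma Aa : A a = 1. Proof. by rewrite -Ha1 HAK //; lia. Qed.
Lemma Ab : A b = a.+1. Proof. by rewrite -Hab HAK //; lia. Qed.

Lemma Qclosed x : x <= k.+4 -> ~~ inQ x -> ~~ inQ (A x).
Proof.
move=> xk; apply: contra; rewrite /inQ => /or4P[] /eqP Hx.
- by rewrite -(HAK xk) Hx Ha1 eqxx !orbT.
- by rewrite -(HAK xk) Hx Ab eqxx !orbT.
- by rewrite -(HAK xk) Hx Aa eqxx.
- by rewrite -(HAK xk) Hx Hab eqxx !orbT.
Qed.

Lemma AeQ w : w <= k -> ~~ inQ (A (ee w)).
Proof. by move=> wk; apply: Qclosed; [apply: ee_le | apply: ee_Q]. Qed.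

Definition A' w := dd (A (ee w)).

Lemma eeA' w : w <= k -> ee (A' w) = A (ee w).
Proof. by move=> wk; rewrite /A' eeK // AeQ. Qed.

Lemma A'inv w : w <= k -> [/\ A' w <= k, A' (A' w) = w & A' w != w].
Proof.
move=> wk; have ek := ee_le wk; split.
- by apply: dd_le; [apply: HAl | apply: AeQ].
- by rewrite /A' (eeA' wk) HAK // ddK.
- apply/eqP=> H; have := eeA' wk; rewrite H => /esym/eqP.
  by case: (HA ek) => _ _ /negbTE ->.
Qed.

Lemma A'0 : A' 0 = k.
Proof. rewrite /A' ee_0 HA0 /dd; repeat case: ifP; move=> *; lia. Qed.

Definition sn x := A (if x == k.+4 then 0 else x.+1).
Definition sn' w := A' (if w == k then 0 else w.+1).

Lemma snE x : x < k.+4 -> sn x = A x.+1.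
Proof. by rewrite /sn; case: eqP => //; lia. Qed.

Lemma sn_le x : x <= k.+4 -> sn x <= k.+4.
Proof. by move=> xk; rewrite /sn; case: eqP => H; apply: HAl; lia. Qed.

Lemma chain w : w <= k -> exists j, [/\ 0 < j, iter j sn (ee w) = ee (sn' w) &
  forall i, 0 < i < j -> inQ (iter i sn (ee w))].
Proof.
move=> wk.
have s0 : sn 0 = a by rewrite snE // Ha1.
have sa : sn a = b by rewrite snE // ?Hab; lia.
have sb : sn b = A b.+1 by rewrite snE //; lia.
have s1 : sn 1 = A 2 by rewrite snE.
have sam1 : sn a.-1 = 1 by rewrite snE; [rewrite prednK ?Aa //; lia | lia].
have sbm1 : sn b.-1 = a.+1 by rewrite snE; [rewrite prednK ?Ab //; lia | lia].
have sa1 : sn a.+1 = A a.+2 by rewrite snE //; lia.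
have Qa : inQ a by rewrite /inQ eqxx !orbT.
have Qb : inQ b by rewrite /inQ eqxx !orbT.
have Q1 : inQ 1 by rewrite /inQ eqxx.
have Qa1 : inQ a.+1 by rewrite /inQ eqxx !orbT.
case: (eqVneq w k) => [->|wnk].
  exists 1; split => //; last by move=> i; lia.
  by rewrite /= ee_k /sn' /sn eqxx HA0 eqxx A'0 ee_k.
have sn'E : sn' w = A' w.+1 by rewrite /sn' (negbTE wnk).
rewrite sn'E eeA'; last by lia.
case: (eqVneq w 0) => [->|wn0].
  rewrite ee_0; case: (ltnP b.+1 a) => Hq.
    have -> : ee 1 = b.+1 by ifl.
    exists 3; split => //=; first by rewrite s0 sa sb.
    move=> i Hi; have : (i == 1) || (i == 2) by lia.
    by case/orP => /eqP -> /=; rewrite ?s0 ?sa.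
  have ab : a = b.+1 by lia.
  case: (ltnP 2 b) => Hp.
    have -> : ee 1 = 2 by ifl.
    exists 4; split => //=; first by rewrite s0 sa sb -ab Aa s1.
    move=> i Hi; have : [|| i == 1, i == 2 | i == 3] by lia.
    by case/or3P => /eqP -> /=; rewrite ?s0 ?sa ?sb -?ab ?Aa.
  have b2 : b = 2 by lia.
  have -> : ee 1 = a.+2 by ifl.
  exists 5; split => //=; first by rewrite s0 sa sb -ab Aa s1 -b2 Ab sa1.
  move=> i Hi; have : [|| i == 1, i == 2, i == 3 | i == 4] by lia.
  by case/or4P => /eqP -> /=; rewrite ?s0 ?sa ?sb -?ab ?Aa ?s1 -?b2 ?Ab.
case: (eqVneq w (a - b - 1)) => [wq|wnq].
  have -> : ee w = a.-1 by ifl.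
  case: (ltnP 2 b) => Hp.
    have -> : ee w.+1 = 2 by ifl.
    exists 2; split => //=; first by rewrite sam1 s1.
    move=> i Hi; have -> : i = 1 by lia.
    by rewrite /= sam1.
  have b2 : b = 2 by lia.
  have -> : ee w.+1 = a.+2 by ifl.
  exists 3; split => //=; first by rewrite sam1 s1 -b2 Ab sa1.
  move=> i Hi; have : (i == 1) || (i == 2) by lia.
  by case/orP => /eqP -> /=; rewrite ?sam1 ?s1 -?b2 ?Ab.
case: (eqVneq w (a - 3)) => [wp|wnp].
  have -> : ee w = b.-1 by ifl.
  have -> : ee w.+1 = a.+2 by ifl.
  exists 2; split => //=; first by rewrite sbm1 sa1.
  move=> i Hi; have -> : i = 1 by lia.
  by rewrite /= sbm1.
exists 1; split => //=; last by move=> i; lia.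
rewrite ee_gen //; last by lia.
by rewrite snE //; apply: ee_lt; lia.
Qed.

Lemma reach x : x <= k.+4 -> exists j, ~~ inQ (iter j sn x).
Proof.
move=> xk.
have ra1 : exists j, ~~ inQ (iter j sn a.+1).
  exists 1 => /=; rewrite snE; last by lia.
  have -> : a.+2 = ee (a - 2) by ifl.
  by apply: AeQ; lia.
have r1 : exists j, ~~ inQ (iter j sn 1).
  case: (ltnP 2 b) => Hp.
    exists 1 => /=; rewrite snE //.
    have -> : 2 = ee (a - b) by ifl.
    by apply: AeQ; lia.
  have E : sn 1 = a.+1.
    rewrite snE //; have -> : 2 = b by lia.
    by rewrite Ab.
  by case: ra1 => j Hj; exists j.+1; rewrite iterSr E.
have rb : exists j, ~~ inQ (iter j sn b).
  case: (ltnP b.+1 a) => Hq.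
    exists 1 => /=; rewrite snE; last by lia.
    have -> : b.+1 = ee 1 by ifl.
    by apply: AeQ; lia.
  have E : sn b = 1.
    rewrite snE; last by lia.
    have -> : b.+1 = a by lia.
    by rewrite Aa.
  by case: r1 => j Hj; exists j.+1; rewrite iterSr E.
have ra : exists j, ~~ inQ (iter j sn a).
  have E : sn a = b by rewrite snE ?Hab //; lia.
  by case: rb => j Hj; exists j.+1; rewrite iterSr E.
case: (boolP (inQ x)) => [|Hx]; last by exists 0.
by rewrite /inQ => /or4P[] /eqP ->.
Qed.
End Fwd.

Section Bwd.
Variable C : nat -> nat.
Hypothesis HC : forall w, w <= k -> [/\ C w <= k, C (C w) = w & C w != w].
Hypothesis HC0 : C 0 = k.

Definition Bf x := if x == 1 then a else if x == a then 1 else if x == b then a.+1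
  else if x == a.+1 then b else ee (C (dd x)).

Lemma BfQ x : ~~ inQ x -> Bf x = ee (C (dd x)).
Proof. clear HC HC0. rewrite /inQ /Bf; repeat case: ifP; move=> * //; lia. Qed.

Lemma Bf1 : Bf 1 = a. Proof. by rewrite /Bf. Qed.
Lemma Bfa1 : Bf a.+1 = b.
Proof. clear HC HC0. rewrite /Bf; repeat case: ifP; move=> *; lia. Qed.
Lemma Bfa : Bf a = 1.
Proof. clear HC HC0. rewrite /Bf; repeat case: ifP; move=> *; lia. Qed.
Lemma Bfb : Bf b = a.+1.
Proof. clear HC HC0. rewrite /Bf; repeat case: ifP; move=> *; lia. Qed.

Lemma Bf0 : Bf 0 = k.+4.
Proof. by rewrite BfQ /=; [rewrite HC0 ee_k | rewrite /inQ; lia]. Qed.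

Lemma Bf_inv x : x <= k.+4 -> [/\ Bf x <= k.+4, Bf (Bf x) = x & Bf x != x].
Proof.
move=> xk; case: (boolP (inQ x)) => Hx.
  move: Hx; rewrite /inQ => /or4P[] /eqP ->;
    rewrite ?Bf1 ?Bfa ?Bfb ?Bfa1 ?Bf1 ?Bfa ?Bfb ?Bfa1; split; lia.
have dk := dd_le xk Hx.
have [C1 C2 C3] := HC dk.
rewrite !BfQ ?ee_Q // ddK C2 eeK //; split => //; first exact: ee_le.
by apply/eqP=> /(congr1 dd); rewrite !ddK; apply/eqP.
Qed.

Lemma C_Bf w : w <= k -> dd (Bf (ee w)) = C w.
Proof. by move=> wk; rewrite BfQ ?ee_Q // ddK ddK. Qed.
End Bwd.

Lemma Bf_A' (A : nat -> nat) :
  (forall x, x <= k.+4 -> [/\ A x <= k.+4, A (A x) = x & A x != x]) ->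
  A 0 = k.+4 -> A 1 = a -> A a.+1 = b ->
  forall x, x <= k.+4 -> Bf (A' A) x = A x.
Proof.
move=> HA HA0 Ha1 Hab x xk.
have Aa : A a = 1 by rewrite -Ha1; case: (HA 1) => //; lia.
have Ab : A b = a.+1 by rewrite -Hab; case: (HA a.+1) => //; lia.
case: (boolP (inQ x)) => Hx.
  move: Hx; rewrite /inQ => /or4P[] /eqP ->;
    by rewrite ?Bf1 ?Bfa ?Bfb ?Bfa1 ?Ha1 ?Aa ?Ab ?Hab.
have HQ : ~~ inQ (A x) by apply: Qclosed.
by rewrite BfQ // /A' eeK // eeK.
Qed.
End Surg.

Definition ninv K (f : nat -> nat) :=
  forall x, x <= K -> [/\ f x <= K, f (f x) = x & f x != x].
Definition av K (al : {perm 'I_K.+1}) (x : nat) : nat := val (al (inord x)).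
Definition snG K (A : nat -> nat) x := A (if x == K then 0 else x.+1).

Section Glue.
Variable K : nat.
Implicit Types (al be : {perm 'I_K.+1}).

Lemma av_le al x : av al x <= K.
Proof. by have := ltn_ord (al (inord x)); rewrite ltnS. Qed.

Lemma val_perm al (y : 'I_K.+1) : nat_of_ord (al y) = av al y.
Proof. by rewrite /av inord_val. Qed.

Definition nperm (f : nat -> nat) : {perm 'I_K.+1} :=
  mkperm (fun x : 'I_K.+1 => inord (f x)).

Lemma inordE (x : nat) : x <= K -> nat_of_ord (inord x : 'I_K.+1) = x.
Proof. by move=> xK; rewrite inordK // ltnS. Qed.

Lemma nperm_av f : ninv K f -> forall x, x <= K -> av (nperm f) x = f x.
Proof.
move=> Hf x xK; rewrite /av /nperm mkpermE.
  by rewrite /= inordE // inordE //; case: (Hf x).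
move=> y z /(congr1 val) /=.
have [y1 Hy _] := Hf y (ltn_ord y); have [z1 Hz _] := Hf z (ltn_ord z).
rewrite !inordE // => E; apply: val_inj.
by rewrite /= -Hy E Hz.
Qed.

Lemma perm_eq_av al be : (forall x, x <= K -> av al x = av be x) -> al = be.
Proof.
by move=> H; apply/permP => x; apply: ord_inj; rewrite !val_perm H //; have := ltn_ord x; rewrite ltnS.
Qed.

Lemma val_cyc (x : 'I_K.+1) : val (cyc K x) = if nat_of_ord x == K then 0 else (nat_of_ord x).+1.
Proof.
rewrite cycE; case: eqP => [->|H]; first by rewrite modnn.
by rewrite modn_small //; have := ltn_ord x; lia.
Qed.

Lemma porbit_cyc (x y : 'I_K.+1) : y \in porbit (cyc K) x.
Proof.
apply/porbitP; exists (y + K.+1 - x); rewrite permX; apply: val_inj.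
rewrite iter_cycE.
have -> : x + (y + K.+1 - x) = y + K.+1 by have := ltn_ord x; lia.
by rewrite modnDr modn_small.
Qed.

Lemma sigma_val al (x : 'I_K.+1) :
  val (pm_sigma (al, cyc K, ord_max) x) = snG K (av al) (nat_of_ord x).
Proof. by rewrite /pm_sigma permM /= val_perm val_cyc. Qed.

Lemma iter_sigma al j (x : 'I_K.+1) :
  val (iter j (pm_sigma (al, cyc K, ord_max)) x) = iter j (snG K (av al)) (nat_of_ord x).
Proof. by elim: j => [|j IH] //=; rewrite sigma_val IH. Qed.

Lemma pmap_normP al :
  is_pmap (al, cyc K, ord_max) <-> ninv K (av al) /\ av al 0 = K.
Proof.
split.
  case/andP=> /andP[/forallP Ha _] /eqP Hs; split.
    move=> x xK; split; first exact: av_le.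
      have /andP[/eqP E _] := Ha (inord x).
      by rewrite /av inord_val E /= inordE.
    have /andP[_ E] := Ha (inord x).
    by apply: contra E => /eqP E; apply/eqP/val_inj; rewrite /= val_perm inordK.
  move: Hs; rewrite /pm_sigma permM /= => /(congr1 val) /=.
  have -> : cyc K ord_max = inord 0.
    by apply: val_inj; rewrite val_cyc /= eqxx inordK.
  by rewrite -/(av al 0).
move=> [Hn H0]; apply/andP; split; first (apply/andP; split).
- apply/forallP => x; have [_ E1 E2] := Hn x (ltn_ord x).
  rewrite -!(inj_eq (@ord_inj _)) !val_perm E1 eqxx /=.
  by [].
- by apply/forallP => x; apply/forallP => y; apply: porbit_cyc.
- rewrite /pm_sigma permM /= -(inj_eq (@ord_inj _)) val_perm val_cyc /= eqxx.
  by rewrite H0.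
Qed.

Lemma alpha_max al : is_pmap (al, cyc K, ord_max) -> al ord_max = ord0.
Proof.
case/pmap_normP => Hn H0; apply: ord_inj; rewrite val_perm /=.
by have [_ E _] := Hn 0 (leq0n K); rewrite H0 in E.
Qed.

Lemma order_cyc : fingraph.order (cyc K) ord0 = K.+1.
Proof.
rewrite /fingraph.order -[RHS](card_ord K.+1); apply: eq_card => y.
rewrite [RHS]inE; have <- : iter y (cyc K) ord0 = y.
  by apply: ord_inj; rewrite iter_cycE add0n modn_small.
exact: fconnect_iter.
Qed.

Lemma gpos_norm al (x : 'I_K.+1) : is_pmap (al, cyc K, ord_max) ->
  gpos (al, cyc K, ord_max) x = x.
Proof.
move=> H; rewrite /gpos /pm_R1 /= alpha_max //.
have Ex : iter x (cyc K) ord0 = x.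
  by apply: ord_inj; rewrite iter_cycE add0n modn_small.
have Hlt : nat_of_ord x < fingraph.order (cyc K) ord0 by rewrite order_cyc.
by have := findex_iter Hlt; rewrite Ex.
Qed.

Lemma typeB_norm al : 0 < K -> is_pmap (al, cyc K, ord_max) ->
  typeB (al, cyc K, ord_max) =
  [&& 2 <= av al (av al 1).+1, av al (av al 1).+1 < av al 1 & (av al 1).+2 <= K].
Proof.
move=> K0 H; have [Hn H0] := (pmap_normP al).1 H.
rewrite /typeB /pm_R1 /= !gpos_norm // alpha_max //.
set s := pm_sigma _.
set A := av al.
have v2 : nat_of_ord (s ord0) = A 1.
  by rewrite sigma_val /snG /=; case: eqP => //; lia.
have [_ E1 _] := Hn 1 K0.
have va2 : nat_of_ord (al (s ord0)) = 1 by rewrite val_perm v2.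
rewrite va2.
have v3 : nat_of_ord (s (s ord0)) = snG K A (A 1) by rewrite sigma_val v2.
have va3 : nat_of_ord (al (s (s ord0))) = A (snG K A (A 1)) by rewrite val_perm v3.
rewrite va3 v3 v2 /snG.
have [_ E0 _] := Hn 0 (leq0n K).
rewrite -/A in E0 E1 H0.
case: eqP => [aK|aK].
  rewrite E0 ltn0 !andbF /=; symmetry; apply/negbTE; rewrite aK; lia.
have a1K : (A 1).+1 <= K by have := av_le al 1; rewrite -/A; lia.
have [_ Eb _] := Hn (A 1).+1 a1K.
rewrite -/A in Eb.
rewrite Eb ltnSn andbT.
case: (boolP (1 < A (A 1).+1)) => /= Hb; last by rewrite andbF.
case: (boolP (A (A 1).+1 < A 1)) => /= Hba; last by rewrite andbF.
have -> : (A 1).+2 <= K.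
  apply/negPn/negP => Hn2.
  have aK1 : (A 1).+1 = K by lia.
  by move: Hb; rewrite aK1 -H0 E0.
rewrite andbT.
have Hin : {subset [:: ord0; s ord0; s (s ord0)] <= porbit s ord0}.
  move=> z; rewrite !inE => /or3P[] /eqP ->.
  - exact: porbit_id.
  - by have := mem_porbit s 1 ord0; rewrite permX.
  - by have := mem_porbit s 2 ord0; rewrite permX.
have Hu : uniq [:: ord0; s ord0; s (s ord0)].
  rewrite /= !inE -!(inj_eq (@ord_inj _)) v2 v3 /snG (negbTE (introN eqP aK)) /=.
  apply/and3P; split; lia.
have := subset_leq_card (introT subsetP Hin); rewrite (card_uniqP Hu) /=.
by [].
Qed.
End Glue.

Section Count.
Variable k : nat.
Local Notation BT := 'I_(k.+4).+1.
Local Notation ST := 'I_k.+1.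
Implicit Types (al : {perm BT}) (be : {perm ST}).

Definition Fa al := av al 1.
Definition Fb al := av al (av al 1).+1.
Definition smallp al : {perm ST} := nperm k (A' (Fb al) (Fa al) (av al)).
Definition coreB al := is_pmap (al, cyc k.+4, ord_max) && typeB (al, cyc k.+4, ord_max).

Lemma coreB_facts al : coreB al ->
  [/\ 2 <= Fb al, Fb al < Fa al, Fa al <= k.+2, ninv k.+4 (av al) & av al 0 = k.+4].
Proof.
case/andP=> H; rewrite typeB_norm // => /and3P[h1 h2 h3].
have [Hn H0] := (pmap_normP al).1 H.
by split => //; rewrite /Fa; lia.
Qed.

Section Core.
Variable al : {perm BT}.
Hypothesis Hal : coreB al.
Let b := Fb al.
Let a := Fa al.
Let A := av al.
Let Hb2 : 2 <= b. Proof. by case: (coreB_facts Hal). Qed.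
Let Hba : b < a. Proof. by case: (coreB_facts Hal). Qed.
Let Hak : a <= k.+2. Proof. by case: (coreB_facts Hal). Qed.
Let HA : ninv k.+4 A. Proof. by case: (coreB_facts Hal). Qed.
Let HA0 : A 0 = k.+4. Proof. by case: (coreB_facts Hal). Qed.
Let Ha1 : A 1 = a. Proof. by []. Qed.
Let Hab : A a.+1 = b. Proof. by []. Qed.

Lemma smallp_av w : w <= k -> av (smallp al) w = A' b a A w.
Proof. by move=> wk; rewrite /smallp nperm_av // => x xk; apply: A'inv. Qed.

Lemma smallp_pmap : is_pmap (smallp al, cyc k, ord_max).
Proof.
apply/pmap_normP; split; last by rewrite smallp_av // (A'0 Hb2 Hba Hak).
move=> x xk; have [h1 h2 h3] := A'inv Hb2 Hba Hak HA HA0 Ha1 Hab xk.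
by rewrite !smallp_av.
Qed.

Definition emb (w : ST) : BT := inord (ee b a w).

Lemma emb_val (w : ST) : nat_of_ord (emb w) = ee b a w.
Proof. by rewrite inordE // (ee_le Hb2 Hba Hak) // -ltnS. Qed.

Lemma emb_inj : injective emb.
Proof.
move=> w w' /(congr1 (@nat_of_ord _)); rewrite !emb_val.
by move/(ee_inj Hb2 Hba Hak) => E; apply: ord_inj.
Qed.

Lemma nverts_small : nverts (al, cyc k.+4, ord_max) = nverts (smallp al, cyc k, ord_max).
Proof.
rewrite /nverts; apply: (first_return emb_inj).
  move=> w; have wk : nat_of_ord w <= k by rewrite -ltnS.
  have [j [j0 Hj Hi]] := chain Hb2 Hba Hak HA HA0 Ha1 Hab wk.
  exists j; split => //.
    apply: ord_inj; rewrite iter_sigma emb_val emb_val sigma_val.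
    rewrite Hj /sn' /snG; congr (ee b a _); rewrite smallp_av //.
    by case: eqP => //; lia.
  move=> i /Hi HQ; apply/codomP => -[w' /(congr1 (@nat_of_ord _))].
  rewrite iter_sigma emb_val emb_val => E.
  by move: HQ; rewrite -/A E (negbTE (ee_Q Hb2 Hba Hak w')).
move=> x; have xk : nat_of_ord x <= k.+4 by rewrite -ltnS.
have [j Hj] := reach Hb2 Hba Hak HA HA0 Ha1 Hab xk.
exists j; apply/codomP; exists (inord (dd b a (iter j (sn k A) x))).
apply: ord_inj; rewrite emb_val iter_sigma inordE; last first.
  apply: (dd_le Hb2 Hba Hak) => //.
  by have := ltn_ord (iter j (pm_sigma (al, cyc k.+4, ord_max)) x);
     rewrite ltnS iter_sigma.
by rewrite (eeK Hb2 Hba Hak).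
Qed.

Definition Gb (t : 2.-tuple ST) := nat_of_ord (tnth t ord0) + 2.
Definition Ga (t : 2.-tuple ST) := nat_of_ord (tnth t (@Ordinal 2 1 isT)) + 2.
Definition tup (al' : {perm BT}) : 2.-tuple ST := [tuple inord (Fb al' - 2); inord (Fa al' - 2)].
Definition Ff (al' : {perm BT}) := (tup al', smallp al').
Definition Gm (x : 2.-tuple ST * {perm ST}) : {perm BT} :=
  nperm k.+4 (Bf (Gb x.1) (Ga x.1) (av x.2)).

Lemma Gb_tup : Gb (tup al) = b.
Proof. by rewrite /Gb /tup (tnth_nth ord0) /= inordE; lia. Qed.
Lemma Ga_tup : Ga (tup al) = a.
Proof. by rewrite /Ga /tup (tnth_nth ord0) /= inordE; lia. Qed.

Lemma Bf_ext b' a' (C1 C2 : nat -> nat) : 2 <= b' -> b' < a' -> a' <= k.+2 ->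
  (forall w, w <= k -> C1 w = C2 w) ->
  forall x, x <= k.+4 -> Bf b' a' C1 x = Bf b' a' C2 x.
Proof.
move=> h1 h2 h3 HC x xk; case: (boolP (inQ b' a' x)) => Hx.
  move: Hx; rewrite /inQ => /or4P[] /eqP ->;
  by rewrite ?(Bf1 b' a') ?(Bfa h1 h2 h3) ?(Bfb h1 h2 h3) ?(Bfa1 h1 h2 h3).
by rewrite !(BfQ h1 h2 h3) // HC // (dd_le h1 h2 h3).
Qed.

Lemma GF : Gm (Ff al) = al.
Proof.
have [HCn HC0] := (pmap_normP _).1 smallp_pmap.
rewrite /Gm /Ff /= Gb_tup Ga_tup.
apply: perm_eq_av => x xk.
rewrite nperm_av //; last by move=> y yk; apply: (Bf_inv Hb2 Hba Hak HCn HC0).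
rewrite (@Bf_ext b a _ (A' b a A)) //; last by move=> w wk; rewrite smallp_av.
exact: (Bf_A' Hb2 Hba Hak HA HA0 Ha1 Hab).
Qed.

Lemma tup_sorted : sorted ltn (map val (tup al)).
Proof. by rewrite /tup /= andbT !inordE; lia. Qed.
End Core.

Lemma FG (t : 2.-tuple ST) be : sorted ltn (map val t) -> is_pmap (be, cyc k, ord_max) ->
  coreB (Gm (t, be)) /\ Ff (Gm (t, be)) = (t, be).
Proof.
move=> Ht Hbe.
set b := Gb t; set a := Ga t.
have [t0 [t1 Et]] : exists t0 t1 : ST, t = [tuple t0; t1].
  exists (tnth t ord0), (tnth t (@Ordinal 2 1 isT)).
  by apply: eq_from_tnth => i; case: i => -[|[|]] //= i2; rewrite !(tnth_nth ord0).
have Hb2 : 2 <= b by rewrite /b /Gb; lia.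
have Hba : b < a by move: Ht; rewrite /b /a /Gb /Ga Et !(tnth_nth ord0) /=; lia.
have Hak : a <= k.+2 by rewrite /a /Ga; have := ltn_ord (tnth t (@Ordinal 2 1 isT)); lia.
have [HCn HC0] := (pmap_normP _).1 Hbe.
set al := Gm (t, be).
have avE x : x <= k.+4 -> av al x = Bf b a (av be) x.
  by move=> xk; rewrite nperm_av // => y yk; apply: (Bf_inv Hb2 Hba Hak HCn HC0).
have Hpm : is_pmap (al, cyc k.+4, ord_max).
  apply/pmap_normP; split; last by rewrite avE // (Bf0 Hb2 Hba Hak HC0).
  move=> x xk; have [h1 h2 h3] := Bf_inv Hb2 Hba Hak HCn HC0 xk.
  by rewrite !avE.
have Ea : Fa al = a by rewrite /Fa avE // (Bf1 b a).
have Eb : Fb al = b.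
  rewrite /Fb -/(Fa al) Ea avE; last by lia.
  exact: (Bfa1 Hb2 Hba Hak).
have Hcore : coreB al.
  rewrite /coreB Hpm typeB_norm //.
  move: (Ea) (Eb); rewrite /Fa /Fb => Ea' Eb'; rewrite Eb' Ea' /=; lia.
split => //; rewrite /Ff; congr (_, _).
  apply: eq_from_tnth => i; rewrite /tup !(tnth_nth ord0) Ea Eb.
  case: i => -[|[|//]] /= _; apply: ord_inj; (rewrite inordE; last by lia).
  - by rewrite /b /Gb (tnth_nth ord0) /=; lia.
  - by rewrite /a /Ga (tnth_nth ord0) /=; lia.
apply: perm_eq_av => w wk.
rewrite smallp_av // Eb Ea /A' avE; last exact: (ee_le Hb2 Hba Hak).
exact: (C_Bf Hb2 Hba Hak).
Qed.

Lemma genus_small al G : coreB al ->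
  has_genus (al, cyc k.+4, ord_max) G.+1 = has_genus (smallp al, cyc k, ord_max) G.
Proof.
move=> H; rewrite /has_genus /nedges !card_ord (nverts_small H).
apply/eqP/eqP; lia.
Qed.

Lemma surg_count G :
  #|[set al : {perm BT} | is_pmap (al, cyc k.+4, ord_max) &&
      (has_genus (al, cyc k.+4, ord_max) G.+1 && typeB (al, cyc k.+4, ord_max))]|
  = 'C(k.+1, 2) * #|[set be : {perm ST} | is_pmap (be, cyc k, ord_max) &&
                       has_genus (be, cyc k, ord_max) G]|.
Proof.
rewrite -card_ltn_sorted_tuples -cardsX.
set SB := [set al : {perm BT} | _].
have coreSB al : al \in SB -> coreB al.
  by rewrite inE /coreB => /and3P[-> _ ->].
have -> : setX [set t : 2.-tuple ST | sorted ltn (map val t)]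
   [set be : {perm ST} | is_pmap (be, cyc k, ord_max) && has_genus (be, cyc k, ord_max) G]
   = Ff @: SB.
  apply/setP => -[t be]; rewrite !inE /=; apply/idP/imsetP.
    case/andP => Ht /andP[Hbe Hg].
    have [Hc EF] := FG Ht Hbe.
    exists (Gm (t, be)); last by rewrite EF.
    rewrite inE; move: (Hc); rewrite /coreB => /andP[-> ->] /=.
    by rewrite andbT genus_small // -[smallp _]/((Ff (Gm (t, be))).2) EF.
  move=> [al Hal [-> ->]].
  have Hc := coreSB _ Hal.
  rewrite tup_sorted // smallp_pmap //= -genus_small //.
  by move: Hal; rewrite inE => /and3P[].
rewrite card_in_imset // => x y Hx Hy E.
by rewrite -(GF (coreSB _ Hx)) E GF // coreSB.
Qed.
End Count.

Lemma card_Ucls n g :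
  #|Ucls n g| = #|[set be : {perm 'I_(n.*2).+2} | is_pmap (be, cyc (n.*2).+1, ord_max)
                    && has_genus (be, cyc (n.*2).+1, ord_max) g]|.
Proof.
exact: (@count_norm (n.*2).+1 (fun M => has_genus M g) (fun M t => has_genus_conj M t g)).
Qed.

Lemma card_UBcls n g :
  #|UBcls n.+2 g| = #|[set al : {perm 'I_((n.*2).+1).+4.+1} |
      is_pmap (al, cyc ((n.*2).+1).+4, ord_max) &&
      (has_genus (al, cyc ((n.*2).+1).+4, ord_max) g && typeB (al, cyc ((n.*2).+1).+4, ord_max))]|.
Proof.
apply: (@count_norm ((n.*2).+1).+4 (fun M => has_genus M g && typeB M)).
by move=> M t; rewrite has_genus_conj typeB_conj.
Qed.

Lemma binom_eq n : 'C((n.*2).+2, 2) = n.+1 * (2 * n).+1.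
Proof.
have E : (n.*2).+2 * ((n.*2).+2).-1 = (n.+1 * (2 * n).+1).*2.
  by rewrite -!muln2 /=; lia.
by rewrite bin2 E doubleK.
Qed.

Lemma card_main g n : #|UBcls n.+2 g.+2| = (n.+1 * (2 * n).+1) * #|Ucls n g.+1|.
Proof.
by rewrite card_UBcls card_Ucls (surg_count (n.*2).+1 g.+1) binom_eq.
Qed.

Lemma bij_of_card (A B : finType) : #|A| = #|B| -> exists f : A -> B, bijective f.
Proof.
move=> E.
exists (fun x => enum_val (cast_ord E (enum_rank x))).
exists (fun y => enum_val (cast_ord (esym E) (enum_rank y))).
  by move=> x /=; rewrite enum_valK cast_ordK enum_rankK.
by move=> y /=; rewrite enum_valK cast_ordKV enum_rankK.
Qed.

Theorem proposition5p5 (g n : nat) :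
  (exists f : {X | X \in UBcls n.+2 g.+2} ->
              ('I_((2 * n).+1 * n.+1) * {Y | Y \in Ucls n g.+1})%type,
     bijective f)
  /\ #|UBcls n.+2 g.+2| = (n.+1 * (2 * n).+1) * #|Ucls n g.+1|.
Proof.
split; last exact: card_main.
apply: bij_of_card.
rewrite card_prod card_ord !card_sig card_main.
by rewrite (mulnC (2 * n).+1).
Qed.
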